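(* Suppose $f\colon\prod_{i\in[n]}X_i\to Y$ satisfies condition (BC) and $\Phi_k^-\le\Phi_k^+$ for all $k\in[n]$. Then for all $\mathbf{x}\in\prod_{i\in[n]}X_i$ and $k\in[n]$, $$f(\mathbf{x})=\operatorname{med}\big(f(\mathbf{x}_k^0),\Phi_k^-(x_k),f(\mathbf{x}_k^1)\big)=\operatorname{med}\big(f(\mathbf{x}_k^0),\Phi_k^+(x_k),f(\mathbf{x}_k^1)\big).$$
   Context: $Y$ is a finite distributive lattice identified with a sublattice of $\mathcal{P}(U)$ for a finite set $U$, with least element $0=\emptyset$, greatest element $1=U$, and $\wedge,\vee$ being intersection and union; $\overline{S}=U\setminus S$. For $S\subseteq U$, $\operatorname{cl}(S)=\bigwedge\{y\in Y: y\ge S\}$, $\operatorname{int}(S)=\bigvee\{y\in Y: y\le S\}$. $[n]=\{1,\ldots,n\}$; $X_1,\ldots,X_n$ are arbitrary sets with at least two elements, each with two fixed distinct elements $0_{X_k},1_{X_k}$ (written $0,1$). For $\mathbf{x}\in\prod_i X_i$ and $a\in X_k$, $\mathbf{x}_k^a$ is $\mathbf{x}$ with $k$-th component replaced by $a$. $\operatorname{med}(y_1,y_2,y_3)=(y_1\wedge y_2)\vee(y_2\wedge y_3)\vee(y_3\wedge y_1)$. Condition (BC): $f(\mathbf{x}_k^0)\le f(\mathbf{x})\le f(\mathbf{x}_k^1)$ for all $k\in[n]$ and all $\mathbf{x}$. For $k\in[n]$, $a_k\in X_k$: $$\Phi_k^-(a_k)=\bigvee_{\mathbf{x}:\,x_k=a_k}\operatorname{cl}\big(f(\mathbf{x})\wedge\overline{f(\mathbf{x}_k^0)}\big),\qquad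 \Phi_k^+(a_k)=\bigwedge_{\mathbf{x}:\,x_k=a_k}\operatorname{int}\big(f(\mathbf{x})\vee\overline{f(\mathbf{x}_k^1)}\big),$$ ranging over all $\mathbf{x}$ with $k$-th component $a_k$. *)

(* Defs.v *)
From mathcomp Require Import all_boot.
From Stdlib Require Import ClassicalEpsilon.
Set Implicit Arguments. Unset Strict Implicit. Unset Printing Implicit Defensive.

Definition pbool (P : Prop) : bool :=
  if excluded_middle_informative P then true else false.

Section Defs.
Variable U : finType.

Definition sublattice01 (Y : {set {set U}}) : Prop :=
  [/\ set0 \in Y, [set: U] \in Y,
      (forall a b, a \in Y -> b \in Y -> a :&: b \in Y) &
      (forall a b, a \in Y -> b \in Y -> a :|: b \in Y)].

Definition clY (Y : {set {set U}}) (S : {set U}) : {set U} :=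
  \bigcap_(y in Y | S \subset y) y.
Definition intY (Y : {set {set U}}) (S : {set U}) : {set U} :=
  \bigcup_(y in Y | y \subset S) y.

Definition med (a b c : {set U}) : {set U} :=
  (a :&: b) :|: (b :&: c) :|: (c :&: a).
End Defs.

Section Upd.
Variables (n : nat) (X : 'I_n -> Type).

(* x_k^a : x with k-th component replaced by a *)
Definition upd (x : forall i, X i) (k : 'I_n) (a : X k) : forall i, X i :=
  fun i => match @eqP _ k i with
           | ReflectT e => eq_rect k X a i e
           | ReflectF _ => x i
           end.

Variables (U : finType) (Y : {set {set U}}) (f : (forall i, X i) -> {set U}).

(* Condition (BC), with 0_{X_k} = x0 k, 1_{X_k} = x1 k *)
Definition BC (x0 x1 : forall i, X i) : Prop :=
  forall (k : 'I_n) (x : forall i, X i),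
    f (upd x (x0 k)) \subset f x /\ f x \subset f (upd x (x1 k)).

(* Phi_k^-(a) = join over x with x_k = a of cl(f x /\ ~ f(x_k^0)); since
   joins in Y are unions, this is the union of the (finitely many distinct)
   values. *)
Definition PhiMinus (x0 : forall i, X i) (k : 'I_n) (a : X k) : {set U} :=
  \bigcup_(S : {set U} | pbool (exists x : forall i, X i,
        x k = a /\ S = clY Y (f x :&: ~: f (upd x (x0 k))))) S.

Definition PhiPlus (x1 : forall i, X i) (k : 'I_n) (a : X k) : {set U} :=
  \bigcap_(S : {set U} | pbool (exists x : forall i, X i,
        x k = a /\ S = intY Y (f x :|: ~: f (upd x (x1 k))))) S.
End Upd.

(* Main.v *)
Require Import Defs.
From mathcomp Require Import all_boot.
From Stdlib Require Import ClassicalEpsilon.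

Lemma pboolT (P : Prop) : P -> pbool P.
Proof. by rewrite /pbool; case: excluded_middle_informative. Qed.

Lemma clY_sup (U : finType) (Y : {set {set U}}) (S : {set U}) : S \subset clY Y S.
Proof. by apply/bigcapsP => y /andP[]. Qed.

Lemma intY_sub (U : finType) (Y : {set {set U}}) (S : {set U}) : intY Y S \subset S.
Proof. by apply/bigcupsP => y /andP[]. Qed.

Lemma med_eq (U : finType) (A P B F : {set U}) :
  A \subset F -> F \subset B -> F :&: ~: A \subset P -> P :&: B \subset F ->
  F = med A P B.
Proof.
move=> AF FB FP PF; apply/setP => u; rewrite /med !inE.
move/subsetP: AF => /(_ u); move/subsetP: FB => /(_ u).
move/subsetP: FP => /(_ u); move/subsetP: PF => /(_ u); rewrite !inE.
by case: (u \in A); case: (u \in F); case: (u \in P); case: (u \in B) => //= h1 h2 h3 h4;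
  (try by have := h1 isT); (try by have := h2 isT); (try by have := h3 isT); (try by have := h4 isT).
Qed.

Theorem mainTheorem5 (U : finType) (Y : {set {set U}}) (n : nat)
  (X : 'I_n -> Type) (x0 x1 : forall i, X i)
  (f : (forall i, X i) -> {set U}) :
  sublattice01 Y ->
  (forall i, x0 i <> x1 i) ->
  (forall x, f x \in Y) ->
  BC f x0 x1 ->
  (forall (k : 'I_n) (a : X k), PhiMinus Y f x0 a \subset PhiPlus Y f x1 a) ->
  forall (x : forall i, X i) (k : 'I_n),
    f x = med (f (upd x (x0 k))) (PhiMinus Y f x0 (x k)) (f (upd x (x1 k))) /\
    f x = med (f (upd x (x0 k))) (PhiPlus Y f x1 (x k)) (f (upd x (x1 k))).
Proof.
move=> _ _ _ bc hle x k.
have [AF FB] := bc k x.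
have Hm : f x :&: ~: f (upd x (x0 k)) \subset PhiMinus Y f x0 (x k).
  have H1 : clY Y (f x :&: ~: f (upd x (x0 k))) \subset PhiMinus Y f x0 (x k).
    rewrite /PhiMinus; apply: (@bigcup_sup _ _ (clY Y (f x :&: ~: f (upd x (x0 k)))) _ (fun S => S)).
    by apply: pboolT; exists x.
  by apply/subsetP => u /(subsetP (@clY_sup _ Y _)) /(subsetP H1).
have Hp : PhiPlus Y f x1 (x k) :&: f (upd x (x1 k)) \subset f x.
  have H0 : PhiPlus Y f x1 (x k) \subset intY Y (f x :|: ~: f (upd x (x1 k))).
    rewrite /PhiPlus; apply: (@bigcap_inf _ _ (intY Y (f x :|: ~: f (upd x (x1 k)))) _ (fun S => S)).
    by apply: pboolT; exists x.
  have H1 : PhiPlus Y f x1 (x k) \subset f x :|: ~: f (upd x (x1 k)).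
    by apply/subsetP => u /(subsetP H0) /(subsetP (@intY_sub _ Y _)).
  apply/subsetP => u; rewrite inE => /andP[/(subsetP H1)]; rewrite !inE.
  by case/orP => // /negbTE ->.
have hk := hle k (x k).
split; apply: med_eq => //.
- by apply/subsetP => u; rewrite inE => /andP[h1 h2]; apply: (subsetP Hp); rewrite inE (subsetP hk _ h1) h2.
- by apply/subsetP => u /(subsetP Hm) /(subsetP hk).
Qed.
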